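(* Let $\Omega=\{y\in\mathbb{R}^n: a_i^Ty\le b_i,\ i=1,\ldots,m\}$. There exists a constant $C>0$ depending only on $a_1,\ldots,a_m$ such that the following holds: for every $x\in\Omega$ and $\alpha>0$ for which the nearly-active index set $I(x,\alpha)$ has $q\le n$ elements and $\{a_i:i\in I(x,\alpha)\}$ are linearly independent, the set $\mathcal{D}$ constructed below is a $\Lambda$-positive spanning set for $B(x,\alpha)\cap\Omega$ with $\Lambda\le nC$. Construction: label the nearly-active constraints so that $I(x,\alpha)=\{1,\ldots,q\}$, let $A=[a_1\ \cdots\ a_q]\in\mathbb{R}^{n\times q}$, let $u_1,\ldots,u_n$ be an orthonormal set of left singular vectors of $A$ with $u_1,\ldots,u_q$ spanning $\operatorname{col}(A)$; for $i=1,\ldots,q$ let $\hat d_i:=-(A^\dagger)^Te_i$, $d_i:=\frac{\alpha}{\|\hat d_i\|}\hat d_i$, and let $\alpha_i$ be the largest value in $[0,1]$ with $x-\alpha_id_i\in\Omega$; and set $\mathcal{D}=\{d_1,\ldots,d_q\}\cup\{-\alpha_1d_1,\ldots,-\alpha_qd_q\}\cup\{\pm\alpha u_{q+1},\ldots,\pm\alpha u_n\}$.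
   Context: Nearly-active constraints: $I(x,\alpha):=\{i\in\{1,\ldots,m\}: b_i-\alpha\|a_i\|\le a_i^Tx\}$ (constraints whose boundary hyperplane is within distance $\alpha$ of $x$). $A^\dagger=(A^TA)^{-1}A^T$ is the Moore–Penrose pseudoinverse, $e_i\in\mathbb{R}^q$ the coordinate vectors, $B(y,r)=\{z:\|z-y\|\le r\}$. Given $x\in\Omega$, $\alpha>0$, $\Lambda\ge0$, a set $\{d_1,\ldots,d_p\}$ is a $\Lambda$-positive spanning set for $B(x,\alpha)\cap\Omega$ if $x+d_i\in\Omega$ for all $i$ and, for every $v\in\mathbb{R}^n$ with $x+v\in\Omega$ and $\|v\|\le\alpha$, there exists $c\in\mathbb{R}^p$ with $c\ge0$, $v=\sum_ic_id_i$ and $\|c\|_1\le\Lambda$. *)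

(* Defs.v *)
From HB Require Import structures.
From mathcomp Require Import all_boot all_order all_algebra.
Set Implicit Arguments. Unset Strict Implicit. Unset Printing Implicit Defensive.
Import Order.TTheory GRing.Theory Num.Theory.
Local Open Scope ring_scope.

Section Defs.
Context {R : rcfType}.

Definition dotv {n : nat} (u v : 'cV[R]_n) : R := \sum_(k < n) u k 0 * v k 0.
Definition vnorm {n : nat} (v : 'cV[R]_n) : R := Num.sqrt (dotv v v).

Definition Omega {n m : nat} (a : 'I_m -> 'cV[R]_n) (b : 'I_m -> R)
  (y : 'cV[R]_n) : Prop := forall i, dotv (a i) y <= b i.

Definition nearly_active {n m : nat} (a : 'I_m -> 'cV[R]_n) (b : 'I_m -> R)
  (x : 'cV[R]_n) (alpha : R) : {set 'I_m} :=
  [set i | b i - alpha * vnorm (a i) <= dotv (a i) x].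

(* Moore-Penrose pseudoinverse of a full column rank matrix *)
Definition pinv {n q : nat} (A : 'M[R]_(n, q)) : 'M[R]_(q, n) :=
  invmx (A^T *m A) *m A^T.

Definition evec {q : nat} (i : 'I_q) : 'cV[R]_q := delta_mx i 0.

Definition pos_spanning {n : nat} (Om : 'cV[R]_n -> Prop) (x : 'cV[R]_n)
  (alpha Lam : R) (D : seq 'cV[R]_n) : Prop :=
  (forall d, d \in D -> Om (x + d)) /\
  (forall v : 'cV[R]_n, Om (x + v) -> vnorm v <= alpha ->
     exists c : 'I_(size D) -> R,
       (forall i, 0 <= c i) /\
       v = \sum_(i < size D) c i *: nth 0 D i /\
       \sum_(i < size D) `|c i| <= Lam).

End Defs.

(* Main.v *)
Require Import Defs.
From HB Require Import structures.
From mathcomp Require Import all_boot all_order all_algebra.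
From mathcomp Require Import ring lra.
Import Order.TTheory GRing.Theory Num.Theory.
Local Open Scope ring_scope.
Set Warnings "-notation-overridden -ambiguous-paths".
Set Implicit Arguments. Unset Strict Implicit. Unset Printing Implicit Defensive.

Section Dot.
Variable R : rcfType.
Variable n : nat.
Implicit Types (u v w : 'cV[R]_n).

Lemma dotvE u v : dotv u v = (u^T *m v) 0 0.
Proof. by rewrite /dotv !mxE; apply: eq_bigr => k _; rewrite mxE. Qed.

Lemma dotvC u v : dotv u v = dotv v u.
Proof. by rewrite /dotv; apply: eq_bigr => k _; rewrite mulrC. Qed.

Lemma dotvDr u v w : dotv u (v + w) = dotv u v + dotv u w.
Proof. by rewrite /dotv -big_split; apply: eq_bigr => k _; rewrite mxE mulrDr. Qed.

Lemma dotvDl u v w : dotv (v + w) u = dotv v u + dotv w u.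
Proof. by rewrite dotvC dotvDr !(dotvC u). Qed.

Lemma dotvZr t u v : dotv u (t *: v) = t * dotv u v.
Proof. by rewrite /dotv mulr_sumr; apply: eq_bigr => k _; rewrite mxE mulrCA. Qed.

Lemma dotvZl t u v : dotv (t *: v) u = t * dotv v u.
Proof. by rewrite dotvC dotvZr dotvC. Qed.

Lemma dotvNr u v : dotv u (- v) = - dotv u v.
Proof. by rewrite -scaleN1r dotvZr mulN1r. Qed.

Lemma dotvNl u v : dotv (- v) u = - dotv v u.
Proof. by rewrite dotvC dotvNr dotvC. Qed.

Lemma dotvBr u v w : dotv u (v - w) = dotv u v - dotv u w.
Proof. by rewrite dotvDr dotvNr. Qed.

Lemma dotv0r u : dotv u 0 = 0.
Proof. by rewrite /dotv big1 // => k _; rewrite mxE mulr0. Qed.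

Lemma dotv_sumr I (r : seq I) (P : pred I) (F : I -> 'cV[R]_n) u :
  dotv u (\sum_(i <- r | P i) F i) = \sum_(i <- r | P i) dotv u (F i).
Proof.
elim: r => [|i r IH]; first by rewrite !big_nil dotv0r.
by rewrite !big_cons; case: (P i); rewrite ?dotvDr IH.
Qed.

Lemma dotv_ge0 u : 0 <= dotv u u.
Proof. by apply: sumr_ge0 => k _; rewrite -expr2 sqr_ge0. Qed.

Lemma dotv_eq0 u : dotv u u = 0 -> u = 0.
Proof.
move=> H; apply/matrixP => k l; rewrite (ord1 l) mxE.
have := @psumr_eq0P _ _ xpredT (fun k => u k 0 * u k 0) _ H k isT.
move=> /(_ (fun k _ => sqr_ge0 (u k 0))) /eqP.
by rewrite mulf_eq0 orbb => /eqP.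
Qed.

Lemma vnorm_ge0 u : 0 <= vnorm u.
Proof. exact: sqrtr_ge0. Qed.

Lemma vnormZ t u : vnorm (t *: u) = `|t| * vnorm u.
Proof.
by rewrite /vnorm dotvZl dotvZr mulrA -expr2 sqrtrM ?sqr_ge0 // sqrtr_sqr.
Qed.

Lemma vnormN u : vnorm (- u) = vnorm u.
Proof. by rewrite -scaleN1r vnormZ normrN normr1 mul1r. Qed.

Lemma vnorm_sqr u : vnorm u ^+ 2 = dotv u u.
Proof. by rewrite /vnorm sqr_sqrtr // dotv_ge0. Qed.

Lemma CS u v : `|dotv u v| <= vnorm u * vnorm v.
Proof.
have [H0|Hpos] := eqVneq (dotv u u) 0.
  by rewrite (dotv_eq0 H0) dotvC dotv0r normr0 mulr_ge0 ?vnorm_ge0.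
have Xp : 0 < dotv u u by rewrite lt_def Hpos dotv_ge0.
set X := dotv u u; set Y := dotv v v; set p := dotv u v.
have H := dotv_ge0 (X *: v - p *: u).
rewrite !(dotvDl, dotvDr, dotvNl, dotvNr, dotvZl, dotvZr) -/X -/Y -/p in H.
rewrite (dotvC v u) -/p in H.
have H2 : p ^+ 2 <= X * Y.
  rewrite -(ler_pM2l Xp); move: H.
  rewrite -subr_ge0 => H; rewrite -subr_ge0; move: H; congr (0 <= _).
  by rewrite -/X; ring.
rewrite -ler_sqr ?nnegrE ?mulr_ge0 ?vnorm_ge0 // exprMn !vnorm_sqr.
by rewrite real_normK ?num_real.
Qed.

End Dot.

Section Cone.
Variable R : rcfType.
Variable n : nat.

Definition cone (D : seq 'cV[R]_n) (v : 'cV[R]_n) (L : R) : Prop :=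
  exists c : nat -> R, (forall i, 0 <= c i) /\
    v = \sum_(i < size D) c i *: nth 0 D i /\ \sum_(i < size D) `|c i| <= L.

Lemma cone_nil : cone [::] 0 0.
Proof. by exists (fun _ => 0); split => //; rewrite !big_ord0. Qed.

Lemma cone_single t y : 0 <= t -> cone [:: y] (t *: y) t.
Proof.
move=> t0; exists (fun _ => t); split => //.
by rewrite !big_ord1 /= ger0_norm.
Qed.

Lemma cone_le D v L L' : cone D v L -> L <= L' -> cone D v L'.
Proof. by move=> [c [c0 [-> HL]]] LL; exists c; split => //; split => //; apply: le_trans LL. Qed.

Lemma cone_cat D1 D2 v1 v2 L1 L2 :
  cone D1 v1 L1 -> cone D2 v2 L2 -> cone (D1 ++ D2) (v1 + v2) (L1 + L2).
Proof.
move=> [c1 [c10 [-> H1]]] [c2 [c20 [-> H2]]].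
exists (fun i => if (i < size D1)%N then c1 i else c2 (i - size D1)%N).
split; first by move=> i; case: ifP.
rewrite size_cat !big_split_ord /=; split.
  congr (_ + _); apply: eq_bigr => i _ /=.
    by rewrite ltn_ord nth_cat ltn_ord.
  by rewrite ltnNge leq_addr /= nth_cat ltnNge leq_addr /= addKn.
apply: lerD; [move: H1|move: H2]; apply: le_trans; rewrite le_eqVlt; apply/orP; left; apply/eqP.
  by apply: eq_bigr => i _ /=; rewrite ltn_ord.
by apply: eq_bigr => i _ /=; rewrite ltnNge leq_addr /= addKn.
Qed.

Lemma cone_map (T : Type) (f : T -> 'cV[R]_n) (g : T -> R) (s : seq T) :
  (forall j, 0 <= g j) ->
  cone (map f s) (\sum_(j <- s) g j *: f j) (\sum_(j <- s) g j).
Proof.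
move=> g0; elim: s => [|j s IH]; first by rewrite !big_nil; exact: cone_nil.
by rewrite !big_cons; apply: (cone_cat (D1 := [:: f j])) => //; apply: cone_single.
Qed.

Lemma cone_pos_spanning (Om : 'cV[R]_n -> Prop) x alpha Lam D :
  (forall d, d \in D -> Om (x + d)) ->
  (forall v, Om (x + v) -> vnorm v <= alpha -> cone D v Lam) ->
  pos_spanning Om x alpha Lam D.
Proof.
move=> H1 H2; split => // v Hv Hn.
have [c [c0 [-> HL]]] := H2 v Hv Hn.
by exists (fun i => c i).
Qed.

End Cone.

Section Alg.
Variable R : rcfType.
Variables n m : nat.
Variable a : 'I_m -> 'cV[R]_n.

Definition Amat q (f : 'I_q -> 'I_m) : 'M[R]_(n, q) := \matrix_(k < n, j < q) a (f j) k 0.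
Definition dhat_of q (A : 'M[R]_(n, q)) (i : 'I_q) : 'cV[R]_n := - ((pinv A)^T *m evec i).

Lemma dotA q (f : 'I_q -> 'I_m) j y : dotv (a (f j)) y = ((Amat f)^T *m y) j 0.
Proof. by rewrite /dotv !mxE; apply: eq_bigr => k _; rewrite !mxE. Qed.

Lemma unitM q (A : 'M[R]_(n, q)) : row_free A^T -> A^T *m A \in unitmx.
Proof.
move=> Hf; rewrite unitmxE unitfE; apply/negP => /det0P [w w0 Hw].
have H1 : (w *m A^T) *m (w *m A^T)^T = 0 by rewrite trmx_mul trmxK mulmxA -(mulmxA w) Hw mul0mx.
have H2 : w *m A^T = 0.
  have H : dotv (w *m A^T)^T (w *m A^T)^T = 0 by rewrite dotvE trmxK H1 mxE.
  by rewrite -[LHS]trmxK (dotv_eq0 H) trmx0.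
by move/eqP: H2; rewrite mulmx_free_eq0 // (negbTE w0).
Qed.

Lemma Pt_form q (A : 'M[R]_(n, q)) : (pinv A)^T = A *m (invmx (A^T *m A))^T.
Proof. by rewrite /pinv trmx_mul trmxK. Qed.

Lemma MT q (A : 'M[R]_(n, q)) : (A^T *m A)^T = A^T *m A.
Proof. by rewrite trmx_mul trmxK. Qed.

Lemma AtPt q (A : 'M[R]_(n, q)) : row_free A^T -> A^T *m (pinv A)^T = 1%:M.
Proof.
move=> Hf; rewrite Pt_form mulmxA -{1}(MT A) -trmx_mul mulVmx ?trmx1 //.
exact: unitM.
Qed.

Lemma dot_dhat q (f : 'I_q -> 'I_m) j i : row_free (Amat f)^T ->
  dotv (a (f j)) (dhat_of (Amat f) i) = - (j == i)%:R.
Proof.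
move=> Hf; rewrite dotA /dhat_of mulmxN mulmxA AtPt // mul1mx !mxE.
by rewrite eqxx andbT.
Qed.

Lemma recon q (f : 'I_q -> 'I_m) z : row_free (Amat f)^T ->
  Amat f *m z = - \sum_i dotv (a (f i)) (Amat f *m z) *: dhat_of (Amat f) i.
Proof.
move=> Hf; set A := Amat f.
have -> : \sum_i dotv (a (f i)) (A *m z) *: dhat_of A i =
   - ((pinv A)^T *m (A^T *m (A *m z))).
  rewrite {1}(matrix_sum_delta (A^T *m (A *m z))) mulmx_sumr -sumrN.
  apply: eq_bigr => i _; rewrite big_ord1 /dhat_of dotA -/A scalerN.
  by rewrite scalemxAr.
rewrite opprK Pt_form (mulmxA A^T A z) -/A.
set M := A^T *m A.
have HM : (invmx M)^T *m M = 1%:M.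
  by rewrite -[X in _ *m X](MT A) -trmx_mul mulmxV ?trmx1 //; exact: unitM.
by rewrite -mulmxA (mulmxA _ M) HM mul1mx.
Qed.

Lemma dhat_neq0 q (f : 'I_q -> 'I_m) i : row_free (Amat f)^T ->
  0 < vnorm (dhat_of (Amat f) i).
Proof.
move=> Hf; rewrite lt_def vnorm_ge0 andbT; apply/eqP => H.
have H1 : dotv (dhat_of (Amat f) i) (dhat_of (Amat f) i) = 0.
  by rewrite -vnorm_sqr H expr0n.
have := dot_dhat i i Hf; rewrite (dotv_eq0 H1) dotv0r eqxx => /eqP.
by rewrite eq_sym oppr_eq0 oner_eq0.
Qed.

Lemma u_expand (u : 'I_n -> 'cV[R]_n) :
  (forall j k, dotv (u j) (u k) = (j == k)%:R) ->
  forall v, v = \sum_j dotv (u j) v *: u j.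
Proof.
move=> Hu v; set U : 'M[R]_n := \matrix_(k, j) u j k 0.
have H1 : U^T *m U = 1%:M.
  apply/matrixP => j k; rewrite !mxE -Hu /dotv; apply: eq_bigr => l _.
  by rewrite !mxE.
have H2 := mulmx1C H1.
have E : v = U *m (U^T *m v) by rewrite mulmxA H2 mul1mx.
rewrite {1}E.
apply/matrixP => k l; rewrite (ord1 l) !mxE summxE; apply: eq_bigr => j _.
rewrite !mxE mulrC; congr (_ * _); rewrite /dotv; apply: eq_bigr => i _.
by rewrite !mxE.
Qed.

End Alg.

Section Cst.
Variable R : rcfType.
Variables n m : nat.
Variable a : 'I_m -> 'cV[R]_n.

Definition Kf q (f : 'I_q -> 'I_m) i := vnorm (a (f i)) * vnorm (dhat_of (Amat a f) i).

Definition Cst := 1 + \sum_(k < n.+1) \sum_(f : {ffun 'I_k -> 'I_m}) \sum_(i < k) Kf (fun j => f j) i.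

Lemma le_sum1 (I : finType) (F : I -> R) j : (forall i, 0 <= F i) -> F j <= \sum_i F i.
Proof.
move=> F0; rewrite (bigD1 j) //= lerDl; exact: sumr_ge0.
Qed.

Lemma Kf_ge0 q (f : 'I_q -> 'I_m) i : 0 <= Kf f i.
Proof. by rewrite mulr_ge0 ?vnorm_ge0. Qed.

Lemma Cst_ge1 : 1 <= Cst.
Proof.
rewrite lerDl; apply: sumr_ge0 => k _; apply: sumr_ge0 => f _; apply: sumr_ge0 => i _.
exact: Kf_ge0.
Qed.

Lemma Kf_le q (Hq : (q <= n)%N) (f : 'I_q -> 'I_m) i : Kf f i <= Cst.
Proof.
have Hq' : (q < n.+1)%N by [].
apply: le_trans (_ : _ <= \sum_(k < n.+1) \sum_(f : {ffun 'I_k -> 'I_m}) \sum_(i < k) Kf (fun j => f j) i) _; last first.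
  by rewrite lerDr.
apply: le_trans (le_sum1 (Ordinal Hq') _); last first.
  move=> k; apply: sumr_ge0 => g _; apply: sumr_ge0 => l _; exact: Kf_ge0.
apply: le_trans (le_sum1 (finfun f) _); last first.
  move=> g; apply: sumr_ge0 => l _; exact: Kf_ge0.
apply: le_trans (le_sum1 i _); last by move=> l; exact: Kf_ge0.
have E : Amat a (fun j => finfun f j) = Amat a f.
  by apply/matrixP => k l; rewrite !mxE ffunE.
by rewrite /Kf E ffunE.
Qed.

End Cst.

Section Om.
Variable R : rcfType.
Variables n m : nat.
Variable a : 'I_m -> 'cV[R]_n.

Lemma dot_le (u v : 'cV[R]_n) : dotv u v <= vnorm u * vnorm v.
Proof. exact: le_trans (ler_norm _) (CS u v). Qed.

Lemma Om_step b x alpha q (sigma : 'I_q -> 'I_m) y :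
  Omega a b x ->
  (forall i, i \in nearly_active a b x alpha <-> exists j, sigma j = i) ->
  vnorm y <= alpha ->
  (forall j, dotv (a (sigma j)) y <= b (sigma j) - dotv (a (sigma j)) x) ->
  Omega a b (x + y).
Proof.
move=> Hx Hna Hy Hj k; rewrite dotvDr.
case: (boolP (k \in nearly_active a b x alpha)) => Hk.
  by case/Hna: Hk => j <-; have := Hj j; rewrite lerBrDl addrC.
move: Hk; rewrite inE -ltNge => Hk.
have H1 := dot_le (a k) y.
have H2 : vnorm (a k) * vnorm y <= vnorm (a k) * alpha by rewrite ler_wpM2l ?vnorm_ge0.
rewrite mulrC in Hk.
apply/ltW; rewrite -ltrBrDl; apply: le_lt_trans H1 _; apply: le_lt_trans H2 _.
move: Hk; set t := vnorm (a k) * alpha; lra.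
Qed.

End Om.

Section Arith.
Variable R : rcfType.

Lemma arith2 (p r Nd alpha al C K : R) : 0 < p -> p <= r -> 0 < Nd -> 0 < alpha ->
  1 <= C -> K <= C -> p * Nd <= K * alpha ->
  (forall t, 0 <= t <= 1 -> t * alpha / Nd <= r -> t <= al) ->
  0 < al /\ p * Nd / (alpha * al) <= C.
Proof.
move=> p0 pr N0 a0 C1 KC pK Ht.
have r0 : 0 < r by apply: lt_le_trans pr.
case: (lerP (r * Nd / alpha) 1) => Hs.
  set t := r * Nd / alpha in Hs.
  have t0 : 0 < t by rewrite divr_gt0 // mulr_gt0.
  have tal : t <= al.
    apply: Ht; first by rewrite Hs ltW.
    rewrite /t le_eqVlt; apply/orP; left; apply/eqP.
    by field; rewrite !gt_eqF.
  have al0 : 0 < al by apply: lt_le_trans tal.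
  split => //; rewrite ler_pdivrMr ?mulr_gt0 //.
  have H1 : r * Nd <= alpha * al.
    by move: tal; rewrite /t ler_pdivrMr // [al * _]mulrC.
  have H2 : alpha * al <= C * (alpha * al) by rewrite ler_peMl // ltW // mulr_gt0.
  by apply: (le_trans _ H2); apply: (le_trans _ H1); rewrite ler_pM2r.
have tal : 1 <= al.
  apply: Ht; first by rewrite ler01 lexx.
  rewrite mul1r ler_pdivrMr //.
  by move: Hs; rewrite ltr_pdivlMr // mul1r => /ltW.
have al0 : 0 < al by apply: lt_le_trans tal.
split => //; rewrite ler_pdivrMr ?mulr_gt0 //.
apply: le_trans pK _; rewrite mulrA.
apply: (le_trans (y := C * alpha)); first by rewrite ler_pM2r.
by rewrite ler_peMr // mulr_ge0 ?ltW // (lt_le_trans ltr01).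
Qed.

Lemma arith1 (p Nd alpha C K : R) : 0 < Nd -> 0 < alpha -> K <= C ->
  - p * Nd <= K * alpha -> - p * Nd / alpha <= C.
Proof.
move=> N0 a0 KC H; rewrite ler_pdivrMr //; apply: le_trans H _.
by rewrite ler_pM2r.
Qed.

End Arith.

Theorem corollary5p9 (R : rcfType) (n m : nat) (a : 'I_m -> 'cV[R]_n) :
  exists C : R, 0 < C /\
  forall (b : 'I_m -> R) (x : 'cV[R]_n) (alpha : R) (q : nat)
         (sigma : 'I_q -> 'I_m)            (* labelling of I(x,alpha) *)
         (u : 'I_n -> 'cV[R]_n)            (* left singular vectors of A *)
         (al : 'I_q -> R),                 (* the alpha_i *)
    Omega a b x -> 0 < alpha ->
    injective sigma ->
    (forall i, i \in nearly_active a b x alpha <-> exists j, sigma j = i) ->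
    (q <= n)%N ->
    let A : 'M[R]_(n, q) := \matrix_(k < n, j < q) a (sigma j) k 0 in
    row_free A^T ->                        (* {a_i : i in I} lin. indep. *)
    (forall j k, dotv (u j) (u k) = (j == k)%:R) ->
    (forall j, exists s : R, 0 <= s /\ A *m A^T *m u j = s *: u j) ->
    (forall v : 'cV[R]_n, (exists w : 'cV[R]_q, v = A *m w) <->
       exists c : 'I_n -> R, v = \sum_(j < n | (j < q)%N) c j *: u j) ->
    let dhat (i : 'I_q) : 'cV[R]_n := - ((pinv A)^T *m evec i) in
    let d (i : 'I_q) : 'cV[R]_n := (alpha / vnorm (dhat i)) *: dhat i in
    (forall i, 0 <= al i <= 1 /\ Omega a b (x - al i *: d i) /\
       forall t : R, 0 <= t <= 1 -> Omega a b (x - t *: d i) -> t <= al i) ->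
    let D : seq 'cV[R]_n :=
      [seq d i | i <- enum 'I_q] ++
      [seq - (al i *: d i) | i <- enum 'I_q] ++
      [seq alpha *: u j | j <- filter (fun j : 'I_n => (q <= j)%N) (enum 'I_n)] ++
      [seq - (alpha *: u j) | j <- filter (fun j : 'I_n => (q <= j)%N) (enum 'I_n)] in
    exists Lam : R, 0 <= Lam /\ Lam <= n%:R * C /\
      pos_spanning (Omega a b) x alpha Lam D.
Proof.
have C1 := Cst_ge1 a.
exists (Cst a); split; first by apply: lt_le_trans C1; exact: ltr01.
move=> b x alpha q sigma u al Hx Halpha Hinj Hna Hqn A HA Hu Heig Hcol dhat d Hal D.
set C := Cst a in C1 *.
exists (n%:R * C); split; first by rewrite mulr_ge0 // (le_trans ler01 C1).
split => //.
have Hdd j i : dotv (a (sigma j)) (dhat i) = - (j == i)%:R := dot_dhat (f := sigma) j i HA.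
have Ndp i : 0 < vnorm (dhat i) := dhat_neq0 (f := sigma) i HA.
have Ndn i : vnorm (dhat i) != 0 by rewrite gt_eqF.
have an0 : alpha != 0 by rewrite gt_eqF.
have Hdn i : vnorm (d i) = alpha.
  by rewrite /d vnormZ ger0_norm ?divr_ge0 ?(ltW Halpha) ?vnorm_ge0 // divfK.
have Hda j i : dotv (a (sigma j)) (d i) = - (alpha / vnorm (dhat i)) * (j == i)%:R.
  by rewrite /d dotvZr Hdd mulrN mulNr.
have Hun k : vnorm (u k) = 1 by rewrite /vnorm Hu eqxx sqrtr1.
have Hau j (k : 'I_n) : (q <= k)%N -> dotv (a (sigma j)) (u k) = 0.
  move=> Hk.
  have [c Hc] : exists c : 'I_n -> R, a (sigma j) = \sum_(l < n | (l < q)%N) c l *: u l.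
    apply/Hcol; exists (evec j); rewrite /evec -colE.
    by apply/matrixP => l l'; rewrite (ord1 l') !mxE.
  rewrite Hc dotvC dotv_sumr big1 // => l Hl; rewrite dotvZr Hu.
  suff /negbTE -> : k != l by rewrite mulr0.
  by apply/eqP => E; move: Hl; rewrite -E ltnNge Hk.
have Hxj j : dotv (a (sigma j)) x <= b (sigma j) := Hx (sigma j).
apply: cone_pos_spanning.
  move=> y; rewrite !mem_cat => /or4P [] /mapP [].
  - move=> i _ ->; apply: (Om_step (sigma := sigma)) => //; first by rewrite Hdn.
    move=> j; rewrite Hda; apply: (@le_trans _ _ 0).
      by rewrite mulNr oppr_le0 mulr_ge0 ?divr_ge0 ?(ltW Halpha) ?vnorm_ge0.
    by rewrite subr_ge0.
  - by move=> i _ ->; case: (Hal i) => _ [].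
  - move=> k; rewrite mem_filter => /andP [Hk _] ->.
    apply: (Om_step (sigma := sigma)) => //; first by rewrite vnormZ Hun mulr1 ger0_norm // ltW.
    by move=> j; rewrite dotvZr Hau // mulr0 subr_ge0.
  - move=> k; rewrite mem_filter => /andP [Hk _] ->.
    apply: (Om_step (sigma := sigma)) => //; first by rewrite vnormN vnormZ Hun mulr1 ger0_norm // ltW.
    by move=> j; rewrite dotvNr dotvZr Hau // mulr0 oppr0 subr_ge0.
move=> v Hv Hnv.
have Hv' j : dotv (a (sigma j)) v <= b (sigma j) - dotv (a (sigma j)) x.
  by have := Hv (sigma j); rewrite dotvDr lerBrDl addrC.
have Ev := u_expand Hu v.
rewrite (bigID (fun k : 'I_n => (k < q)%N)) /= in Ev.
set w := \sum_(k < n | (k < q)%N) _ in Ev.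
set w2 := \sum_(k < n | ~~ (k < q)%N) _ in Ev.
have [z Hz] : exists z, w = A *m z by apply/Hcol; exists (fun k => dotv (u k) v).
have Hw2 i : dotv (a (sigma i)) w2 = 0.
  rewrite dotv_sumr big1 // => k Hk; rewrite dotvZr Hau ?mulr0 //.
  by rewrite leqNgt.
have Hw i : dotv (a (sigma i)) w = dotv (a (sigma i)) v.
  by rewrite [in RHS]Ev dotvDr Hw2 addr0.
have Ew : w = - \sum_i dotv (a (sigma i)) v *: dhat i.
  rewrite Hz (recon (f := sigma) z HA) -Hz.
  by congr (- _); apply: eq_bigr => i _; rewrite Hw.
set p := fun i => dotv (a (sigma i)) v.
have Hpos i : 0 < p i -> 0 < al i /\ p i * vnorm (dhat i) / (alpha * al i) <= C.
  move=> pi0; apply: (arith2 (r := b (sigma i) - dotv (a (sigma i)) x) (K := Kf a sigma i)) => //.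
  - exact: Hv'.
  - exact: Kf_le.
  - rewrite /Kf /p.
    have H1 : dotv (a (sigma i)) v <= vnorm (a (sigma i)) * alpha.
      apply: le_trans (dot_le _ _) _; rewrite ler_wpM2l ?vnorm_ge0 //.
    apply: le_trans (_ : dotv (a (sigma i)) v * vnorm (dhat i) <= vnorm (a (sigma i)) * alpha * vnorm (dhat i)) _.
      by rewrite ler_wpM2r ?vnorm_ge0.
    by rewrite le_eqVlt; apply/orP; left; apply/eqP; rewrite -/(dhat i); ring.
  move=> t Ht Htr; apply: (proj2 (proj2 (Hal i))) => //.
  apply: (Om_step (sigma := sigma)) => //.
    rewrite vnormN vnormZ Hdn ger0_norm; last by case/andP: Ht.
    by case/andP: Ht => t0 t1; rewrite ler_piMl // ltW.
  move=> j; rewrite dotvNr dotvZr Hda.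
  case: (eqVneq j i) => [->|ne].
    apply: le_trans Htr; rewrite le_eqVlt; apply/orP; left; apply/eqP; rewrite /=; ring.
  by rewrite mulr0 mulr0 oppr0 subr_ge0.
have Hneg i : p i <= 0 -> - p i * vnorm (dhat i) / alpha <= C.
  move=> pi0; apply: (arith1 (K := Kf a sigma i)) => //; first exact: Kf_le.
  rewrite /Kf /p.
  have H1 : - dotv (a (sigma i)) v <= vnorm (a (sigma i)) * alpha.
    apply: (le_trans (y := `|dotv (a (sigma i)) v|)).
      by rewrite -normrN ler_norm.
    by apply: le_trans (CS _ _) _; rewrite ler_wpM2l ?vnorm_ge0.
  apply: le_trans (_ : - dotv (a (sigma i)) v * vnorm (dhat i) <= vnorm (a (sigma i)) * alpha * vnorm (dhat i)) _.
    by rewrite ler_wpM2r ?vnorm_ge0.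
  by rewrite le_eqVlt; apply/orP; left; apply/eqP; rewrite -/(dhat i); ring.
pose g1 i := if p i <= 0 then - p i * vnorm (dhat i) / alpha else 0.
pose g2 i := if p i <= 0 then 0 else p i * vnorm (dhat i) / (alpha * al i).
pose g3 (k : 'I_n) := if 0 <= dotv (u k) v then dotv (u k) v / alpha else 0.
pose g4 (k : 'I_n) := if 0 <= dotv (u k) v then 0 else - dotv (u k) v / alpha.
have g10 i : 0 <= g1 i.
  rewrite /g1; case: ifP => // H; apply: divr_ge0; last exact: ltW.
  by apply: mulr_ge0 (vnorm_ge0 _); rewrite oppr_ge0.
have g20 i : 0 <= g2 i.
  rewrite /g2; case: ifP => // /negbT; rewrite -ltNge => H.
  have [al0 _] := Hpos i H; apply: divr_ge0; last by apply: ltW; rewrite mulr_gt0.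
  by apply: mulr_ge0 (vnorm_ge0 _); apply: ltW.
have g30 k : 0 <= g3 k by rewrite /g3; case: ifP => // H; apply: divr_ge0 => //; apply: ltW.
have g40 k : 0 <= g4 k.
  rewrite /g4; case: ifP => // /negbT; rewrite -ltNge => H.
  by apply: divr_ge0; [rewrite oppr_ge0 ltW | apply: ltW].
set F := filter (fun j : 'I_n => (q <= j)%N) (enum 'I_n).
have Hc := cone_cat (cone_map d (enum 'I_q) g10)
   (cone_cat (cone_map (fun i => - (al i *: d i)) (enum 'I_q) g20)
   (cone_cat (cone_map (fun k => alpha *: u k) F g30)
             (cone_map (fun k => - (alpha *: u k)) F g40))).
have Hid1 i : g1 i *: d i + g2 i *: - (al i *: d i) = - p i *: dhat i.
  have Nn := Ndn i.
  rewrite /g1 /g2 /d; case: ifP => H.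
    by rewrite scale0r addr0 scalerA; congr (_ *: _); field; rewrite Nn an0.
  move/negbT: H; rewrite -ltNge => H; have [al0 _] := Hpos i H.
  have aln : al i != 0 by rewrite gt_eqF.
  rewrite scale0r add0r scalerN !scalerA -scaleNr; congr (_ *: _).
  by field; rewrite Nn an0 aln.
have Hid2 k : g3 k *: (alpha *: u k) + g4 k *: - (alpha *: u k) = dotv (u k) v *: u k.
  rewrite /g3 /g4; case: ifP => H.
    by rewrite scale0r addr0 scalerA; congr (_ *: _); field.
  by rewrite scale0r add0r scalerN scalerA -scaleNr; congr (_ *: _); field.
have Ev2 : v = \sum_(i <- enum 'I_q) g1 i *: d i +
   (\sum_(i <- enum 'I_q) g2 i *: - (al i *: d i) +
   (\sum_(j <- F) g3 j *: (alpha *: u j) + \sum_(j <- F) g4 j *: - (alpha *: u j))).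
  rewrite addrA -!big_split /=.
  under eq_bigr do rewrite Hid1.
  under [X in _ + X]eq_bigr do rewrite Hid2.
  rewrite {1}Ev Ew /F big_filter !big_enum_cond -sumrN.
  congr (_ + _); first by apply: eq_big => [i|i _] //; rewrite scaleNr.
  by apply: eq_big => [k|k _] //; rewrite -leqNgt.
rewrite {1}Ev2; apply: cone_le Hc _.
have B1 i : g1 i + g2 i <= C.
  rewrite /g1 /g2; case: ifP => H; first by rewrite addr0; exact: Hneg.
  by move/negbT: H; rewrite -ltNge add0r => H; case: (Hpos i H).
have B2 k : g3 k + g4 k <= C.
  apply: le_trans C1; have Ht : `|dotv (u k) v| <= alpha.
    by apply: le_trans (CS _ _) _; rewrite Hun mul1r.
  rewrite /g3 /g4; case: ifP => H.
    by rewrite addr0 ler_pdivrMr // mul1r; apply: le_trans Ht; apply: ler_norm.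
  by rewrite add0r ler_pdivrMr // mul1r; apply: le_trans Ht; rewrite -normrN ler_norm.
rewrite addrA -!big_split /= /F big_filter !big_enum_cond.
apply: (le_trans (y := \sum_(i in 'I_q | true) C + \sum_(k in 'I_n | (q <= k)%N) C)).
  by apply: lerD; apply: ler_sum => i _.
have E1 : \sum_(i in 'I_q | true) C = \sum_(k < n | (k < q)%N) C.
  rewrite (big_ord_widen_cond _ (fun _ => true) (fun _ => C) Hqn).
  by apply: eq_bigl.
have E2 : \sum_(k in 'I_n | (q <= k)%N) C = \sum_(k < n | ~~ (k < q)%N) C.
  by apply: eq_bigl => k; rewrite -leqNgt.
have E3 : \sum_(k < n) C = \sum_(k < n | (k < q)%N) C + \sum_(k < n | ~~ (k < q)%N) C.
  by rewrite (bigID (fun k : 'I_n => (k < q)%N)).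
by rewrite E1 E2 -E3 sumr_const card_ord mulr_natl.
Qed.
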